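(* Let $\alpha,\beta\in\mathbb{C}$ with $\Re(\alpha)>-1$ and $\Re(\beta)>-1$, and let $n\geq 1$ be an integer. Then for all $w\in\mathbb{C}$ with $|w|<1$ and $w\notin(-1,0]$, $$\sqrt{w}\,\frac{\partial }{\partial w} P_{n}^{(\alpha ,\beta )} (1,w)+\frac{1+\alpha +\beta +n}{4}\, P_{n-1}^{(1+\alpha ,1+\beta )} (1,w)=0 .$$
   Context: For $\lambda\in\mathbb{C}$ and an integer $m\ge 0$, $(\lambda)_m$ denotes the Pochhammer symbol: $(\lambda)_0=1$ and $(\lambda)_m=\lambda(\lambda+1)\cdots(\lambda+m-1)$ for $m\ge1$. $\sqrt{w}$ denotes the principal branch of the square root. For $\alpha,\beta\in\mathbb{C}$ with $\Re(\alpha)>-1$, $\Re(\beta)>-1$ and an integer $n\ge 0$, set $$P_{n}^{(\alpha ,\beta )} (1,w)=\sum _{k=0}^{n} \frac{(1+\alpha)_{n}\, (1+\alpha +\beta)_{n+k}}{k!\,(n-k)!\,(1+\alpha)_{k}\, (1+\alpha +\beta)_{n} } \left(\frac{1-\sqrt{w} }{2} \right)^{k},$$ where the quotient $(1+\alpha+\beta)_{n+k}/(1+\alpha+\beta)_n$ is understood as $(1+\alpha+\beta+n)_k$. The symbol $P_{n-1}^{(1+\alpha ,1+\beta )}(1,w)$ denotes the same polynomial with parameters $\alpha,\beta$ replaced by $1+\alpha,1+\beta$ and degree index $n-1$. *)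

(* Defs.v *)
From HB Require Import structures.
From mathcomp Require Import all_boot all_order all_algebra.
From mathcomp Require Import all_classical all_reals all_analysis.
From mathcomp.real_closed Require Import complex.
Set Implicit Arguments. Unset Strict Implicit. Unset Printing Implicit Defensive.
Import Order.TTheory GRing.Theory Num.Theory.
Import numFieldNormedType.Exports.
Local Open Scope ring_scope.

(* Complex numbers are R[i] for R : realType (mathcomp-real-closed complex.v).
   sqrtc is the principal square root: Re (sqrtc z) >= 0, and Im(sqrtc z) >= 0
   when z is a nonpositive real. *)

Definition poch (R : realType) (x : R[i]) (m : nat) : R[i] :=
  \prod_(j < m) (x + j%:R).

Definition jacP (R : realType) (a b : R[i]) (n : nat) (w : R[i]) : R[i] :=
  \sum_(k < n.+1)
     (poch (1 + a) n * poch (1 + a + b + n%:R) k)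
     / ((k`!)%:R * ((n - k)`!)%:R * poch (1 + a) k)
     * ((1 - sqrtc w) / 2) ^+ k.

(* Main.v *)
Require Import Defs.
From HB Require Import structures.
From mathcomp Require Import all_boot all_order all_algebra.
From mathcomp Require Import all_classical all_reals all_analysis.
From mathcomp.real_closed Require Import complex.
From mathcomp Require Import ring lra.
Import Order.TTheory GRing.Theory Num.Theory.
Import numFieldNormedType.Exports.
Local Open Scope ring_scope.

Section S.
Variable R : realType.
Local Open Scope classical_set_scope.

Lemma Re_sqrtc_ge0 (z : R[i]) : 0 <= complex.Re (sqrtc z).
Proof. by case: z => x y; rewrite /sqrtc /= sqrtr_ge0. Qed.

Lemma ReD (x y : R[i]) : complex.Re (x + y) = complex.Re x + complex.Re y.
Proof. by case: x; case: y. Qed.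

Lemma Re_le_norm (x : R[i]) : ((complex.Re x)%:C)%C <= `|x|.
Proof.
apply: le_trans (normc_ge_Re x); rewrite lecR; exact: real_ler_norm (num_real _).
Qed.

Lemma is_derive_sqrtc (w : R[i]) : 0 < complex.Re (sqrtc w) ->
  is_derive (w : R[i]^o) (1 : R[i]^o) (fun z : R[i]^o => sqrtc z : R[i]^o) (2 * sqrtc w)^-1.
Proof.
move=> hr; set s := sqrtc w; set r : R[i] := ((complex.Re s)%:C)%C.
have r0 : 0 < r by rewrite /r ltcR.
have Rep z : r <= `|sqrtc z + s|.
  apply: le_trans (Re_le_norm _); rewrite ReD lecR lerDr; exact: Re_sqrtc_ge0.
have nz z : sqrtc z + s != 0 by rewrite -normr_gt0 (lt_le_trans r0 (Rep z)).
have key z : sqrtc z - s = (z - w) / (sqrtc z + s).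
  apply/(mulIf (nz z)); rewrite divfK // -subr_sqr !sqr_sqrtc //.
have s0 : r <= `|s| by exact: Re_le_norm.
have lim : (fun h : R[i]^o => h^-1 *: (((fun z : R[i]^o => sqrtc z : R[i]^o) \o shift w) (h *: (1:R[i]^o)) - sqrtc w)) @ (0:R[i]^o)^' --> ((2 * s)^-1 : R[i]^o).
  apply/cvgrPdist_le => e e0.
  have e1 : 0 < e * (2 * r ^+ 3) by rewrite mulr_gt0 // mulr_gt0 // exprn_gt0.
  have F1 := (@nbhs_dnbhs_neq _ (0 : R[i]^o)).
  have F2 := (@dnbhs0_le _ (R[i]^o) _ e1).
  apply: (filterS2 _ _ F1 F2) => h hn0 hle.
  have nzt := nz (h + w).
  have E : h^-1 *: (([eta sqrtc (R:=R)] \o shift w) h%:A - sqrtc (R:=R) w) = (sqrtc (h + w) + s)^-1 :> R[i].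
    rewrite /comp /shift /GRing.scale /= mulr1 key addrK mulrA mulVf // mul1r //.
  rewrite E.
  set t := sqrtc (h + w).
  have ht : t - s = h / (t + s) by rewrite /t key addrK.
  have sn0 : s != 0 by rewrite -normr_gt0 (lt_le_trans r0 s0).
  have hh : h = (t - s) * (t + s) by rewrite ht divfK.
  have -> : (2 * s)^-1 - (t + s)^-1 = h / (2 * s * (t + s) ^+ 2).
    by rewrite hh; field; rewrite nzt sn0.
  have tr := Rep (h + w); rewrite -/t in tr.
  have rge : 0 <= r := ltW r0.
  have d0 : 0 < 2 * `|s| * `|t + s| ^+ 2.
    by rewrite !mulr_gt0 ?exprn_gt0 // (lt_le_trans r0).
  rewrite normrM normfV !normrM -expr2 normr_nat ler_pdivrMr //.
  have b2 : r ^+ 2 <= `|t + s| ^+ 2 by rewrite !expr2; exact: (ler_pM rge rge tr tr).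
  have b3 : r ^+ 3 <= `|s| * `|t + s| ^+ 2 by rewrite exprS; exact: (ler_pM rge (exprn_ge0 2 rge) s0 b2).
  have b : 2 * r ^+ 3 <= 2 * `|s| * `|t + s| ^+ 2.
    by rewrite -mulrA; apply: ler_wpM2l b3; rewrite ler0n.
  exact: le_trans hle (ler_wpM2l (ltW e0) b).
apply: DeriveDef; first exact: cvgP lim.
exact: cvg_lim lim.
Qed.
Lemma Re_sqrtc_gt0 (w : R[i]) : `|w| < 1 ->
  ~ (complex.Im w = 0 /\ -1 < complex.Re w <= 0) -> 0 < complex.Re (sqrtc w).
Proof.
case: w => x y /= hw hw'.
have h1 : Num.sqrt (x ^+ 2 + y ^+ 2) < 1.
  by move: hw; rewrite normc_def /= (_ : (1 : R[i]) = (1%:C)%C) // ltcR.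
rewrite /sqrtc sqrtr_gt0 divr_gt0 ?ltr0n //.
have hx : `|x| <= Num.sqrt (x ^+ 2 + y ^+ 2).
  by rewrite -sqrtr_sqr ler_sqrt ?addr_ge0 ?sqr_ge0 // lerDl sqr_ge0.
have hx1 : -1 < x by move: (le_lt_trans hx h1); rewrite ltr_norml => /andP[].
have ax : - x <= `|x| by rewrite -normrN ler_norm.
have [y0|y0] := eqVneq y 0.
  have xp : 0 < x.
    rewrite ltNge; apply/negP => xle; apply: hw'; split => //; exact/andP.
  have : x <= `|x| by exact: ler_norm.
  lra.
have hx' : `|x| < Num.sqrt (x ^+ 2 + y ^+ 2).
  rewrite -sqrtr_sqr ltr_sqrt ?ltr_pwDr ?exprn_even_gt0 //=.
  exact: sqr_ge0.
lra.
Qed.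
Lemma pochS (x : R[i]) m : poch x m.+1 = x * poch (x + 1) m.
Proof.
rewrite /poch big_ord_recl /= addr0; congr (_ * _); apply: eq_bigr => i _.
by rewrite /bump /= add1n -addrA mulrS.
Qed.

Lemma Re_nat (j : nat) : complex.Re (j%:R : R[i]) = j%:R.
Proof. by elim: j => // j IH; rewrite mulrSr ReD IH -mulrSr. Qed.

Lemma neq0_Re (x : R[i]) : 0 < complex.Re x -> x != 0.
Proof. by move=> h; apply/eqP => e; move: h; rewrite e ltxx. Qed.

Lemma poch_neq0 (x : R[i]) m : 0 < complex.Re x -> poch x m != 0.
Proof.
move=> hx; rewrite /poch; elim/big_ind: _ => //.
- by move=> p q hp hq; rewrite mulf_neq0.
- move=> i _; apply: neq0_Re; rewrite ReD Re_nat.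
  by apply: lt_le_trans hx _; rewrite lerDl ler0n.
Qed.
End S.

Theorem mainTheorem3 (R : realType) (a b : R[i]) (n : nat)
  (ha : -1 < complex.Re a) (hb : -1 < complex.Re b) (hn : (1 <= n)%N)
  (w : R[i]) (hw : `|w| < 1)
  (hw' : ~ (complex.Im w = 0 /\ -1 < complex.Re w <= 0)) :
  derivable (jacP a b n : R[i]^o -> R[i]^o) w 1 /\
  sqrtc w * derive1 (jacP a b n : R[i]^o -> R[i]^o) w
    + (1 + a + b + n%:R) / 4 * jacP (1 + a) (1 + b) n.-1 w = 0.
Proof.
case: n hn => [//|m] _.
have hs := @Re_sqrtc_gt0 R w hw hw'.
have Ds := @is_derive_sqrtc R w hs.
set s := sqrtc w.
pose sq : R[i]^o -> R[i]^o := fun z => sqrtc z.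
pose u : R[i]^o -> R[i]^o := 2^-1 *: (cst 1 - sq).
have Du : is_derive (w : R[i]^o) 1 u (2^-1 *: (0 - (2 * s)^-1)).
  apply: is_deriveZ; apply: is_deriveB; exact: Ds.
pose c (k : nat) := (poch (1 + a) m.+1 * poch (1 + a + b + m.+1%:R) k)
     / ((k`!)%:R * ((m.+1 - k)`!)%:R * poch (1 + a) k).
have Fe : (jacP a b m.+1 : R[i]^o -> R[i]^o) = \sum_(k < m.+2) (c k *: u ^+ k).
  apply/funext => z; rewrite /jacP fct_sumE; apply: eq_bigr => k _.
  rewrite exprfctE; transitivity (c k * (((2:R[i])^-1 * (1 - sqrtc z)) ^+ k)); last by [].
  by rewrite /c (mulrC 2^-1).



have DF : is_derive (w:R[i]^o) 1 (\sum_(k < m.+2) c k *: u ^+ k)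
   (\sum_(k < m.+2) c k *: ((k%:R * u w ^+ k.-1) *: (2^-1 *: (0 - (2 * s)^-1)))).
  apply: is_derive_sum => k; apply: is_deriveZ; exact: is_deriveX.
rewrite Fe derive1E; split; first exact: ex_derive.
rewrite derive_val.

have sn0 : s != 0 by apply: neq0_Re.
rewrite big_ord_recl /= mul0r !scale0r scaler0 add0r /jacP !mulr_sumr -big_split /=.
apply: big1 => j _.
rewrite /GRing.scale /= /c /bump /= add1n subSS !pochS factS.
have a1 : 1 + a != 0 by apply: neq0_Re; rewrite ReD /=; lra.
have p1 : poch (1 + a + 1) j != 0 by apply: poch_neq0; rewrite !ReD /=; lra.
have f1 : (j`!)%:R != 0 :> R[i] by rewrite pnatr_eq0 -lt0n fact_gt0.
have f2 : ((m - j)`!)%:R != 0 :> R[i] by rewrite pnatr_eq0 -lt0n fact_gt0.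
have j1 : (j.+1)%:R != 0 :> R[i] by rewrite pnatr_eq0.
have e2 : 1 + a + 1 + (1 + b) + m%:R = 1 + a + b + m.+1%:R + 1 by rewrite mulrSr; ring.
have uw : u w = (1 - s) / 2 by rewrite mulrC.
rewrite [1 + (1 + a)]addrC e2 add0n uw natrM -/s.
have j1' : 1 + j%:R != 0 :> R[i] by rewrite addrC -mulrSr pnatr_eq0.
by field; rewrite p1 f2 f1 sn0 a1 j1'.
Qed.
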